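(* In the coordinates $(q_1,q_2,p_1,p_2)$ (with $q_1\neq0$) let $\pi'$ be the antisymmetric bivector with $$\pi'^{12}=0,\quad \pi'^{13}=\frac{p_2}{2q_1},\quad \pi'^{14}=1,\quad \pi'^{24}=-\frac{q_2}{q_1},$$ $$\pi'^{23}=\frac{p_1}{2q_1}-\frac{q_1^2}{6}+\frac{t_1}{2}-\frac{p_2^2/4+q_2p_2-q_2^2+t_2}{2q_1^2},\qquad \pi'^{34}=q_1^2-t_1-\frac{p_2^2/4-3q_2^2+t_2}{q_1^2},$$ and $\pi'^{ji}=-\pi'^{ij}$. Then $\pi'$ is a Poisson bivector, it is compatible with the canonical Poisson bivector $\pi$ (i.e. $\pi+\pi'$ is Poisson), and $\{H_1,H_2\}'=0$ for the bracket defined by $\pi'$. Moreover the recursion operator $\pi'\pi^{-1}$ has eigenvalues $u_1,u_2$ (each of multiplicity two), the roots of $$B(u)=u^2-\frac{p_2-2q_2}{2q_1}u+\frac{q_1^2}{6}-\frac{t_1}{2}-\frac{p_1}{2q_1}+\frac{p_2^2/4-q_2^2+t_2}{2q_1^2}.$$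
   Context: $\pi$ denotes the canonical Poisson bivector on $(q_1,q_2,p_1,p_2)$: $\{q_i,p_j\}=\delta_{ij}$, $\{q_1,q_2\}=\{p_1,p_2\}=0$. $t_1,t_2,t_3$ are constants, and $$H_1=\tfrac12p_1p_2-\frac{q_2}{4q_1}p_2^2+q_1^3q_2+\frac{q_2^3}{q_1}-t_1q_1q_2-\frac{t_2q_2}{q_1}-t_3q_1^2,$$ $$H_2=\Big(\frac{p_2^2}{8q_1}+\frac{3t_2-3t_1q_1^2+q_1^4-3q_2^2}{6q_1}\Big)^2+\frac{t_1t_2}{2}-\frac14p_1^2+2t_3q_1q_2-\frac43q_1^2q_2^2 .$$ *)

(* Defs.v *)
From HB Require Import structures.
From mathcomp Require Import all_boot all_order all_algebra.
From mathcomp Require Import all_classical all_reals all_analysis.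
Set Implicit Arguments. Unset Strict Implicit. Unset Printing Implicit Defensive.
Import Order.TTheory GRing.Theory Num.Theory.
Import numFieldNormedType.Exports.
Local Open Scope ring_scope.

(* Phase space points x : 'rV[R]_4 with coordinates
   x_0 = q1, x_1 = q2, x_2 = p1, x_3 = p2 (paper indices 1..4 shifted to 0..3). *)
Definition ix (n : nat) (H : (n < 4)%N) : 'I_4 := Ordinal H.
Definition i0 : 'I_4 := @ix 0 erefl.
Definition i1 : 'I_4 := @ix 1 erefl.
Definition i2 : 'I_4 := @ix 2 erefl.
Definition i3 : 'I_4 := @ix 3 erefl.

Section Defs.
Variable R : realType.
Implicit Types (x : 'rV[R]_4).

Definition q1 x := x ord0 i0.
Definition q2 x := x ord0 i1.
Definition p1 x := x ord0 i2.
Definition p2 x := x ord0 i3.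

Definition partial (i : 'I_4) (f : 'rV[R]_4 -> R) x : R :=
  'D_(delta_mx 0 i : 'rV[R]_4) f x.

Definition antisym (u : nat -> nat -> R) : 'M[R]_4 :=
  \matrix_(i, j) (if (i < j)%N then u i j else if (j < i)%N then - u j i else 0).

Definition pi_can : 'M[R]_4 :=
  antisym (fun i j => match i, j with 0%N, 2%N => 1 | 1%N, 3%N => 1 | _, _ => 0 end).

Definition pi' (t1 t2 : R) x : 'M[R]_4 :=
  let Q1 := q1 x in let Q2 := q2 x in let P1 := p1 x in let P2 := p2 x in
  antisym (fun i j => match i, j with
    | 0%N, 1%N => 0
    | 0%N, 2%N => P2 / (2 * Q1)
    | 0%N, 3%N => 1
    | 1%N, 3%N => - (Q2 / Q1)
    | 1%N, 2%N => P1 / (2 * Q1) - Q1 ^+ 2 / 6 + t1 / 2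
              - (P2 ^+ 2 / 4 + Q2 * P2 - Q2 ^+ 2 + t2) / (2 * Q1 ^+ 2)
    | 2%N, 3%N => Q1 ^+ 2 - t1 - (P2 ^+ 2 / 4 - 3 * Q2 ^+ 2 + t2) / Q1 ^+ 2
    | _, _ => 0 end).

(* P is a Poisson bivector on the set D: antisymmetric, and the Schouten
   bracket [P,P] vanishes, written in coordinates (Jacobi identity). *)
Definition is_poisson (P : 'rV[R]_4 -> 'M[R]_4) (D : set 'rV[R]_4) : Prop :=
  forall x, D x ->
    (forall i j, P x i j = - P x j i) /\
    (forall i j k : 'I_4,
      \sum_(l < 4) (P x i l * partial l (fun y => P y j k) x
                  + P x j l * partial l (fun y => P y k i) x
                  + P x k l * partial l (fun y => P y i j) x) = 0).

Definition pbracket (P : 'rV[R]_4 -> 'M[R]_4) (f g : 'rV[R]_4 -> R) x : R :=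
  \sum_(i < 4) \sum_(j < 4) P x i j * partial i f x * partial j g x.

Definition H1 (t1 t2 t3 : R) x : R :=
  let Q1 := q1 x in let Q2 := q2 x in let P1 := p1 x in let P2 := p2 x in
  P1 * P2 / 2 - Q2 / (4 * Q1) * P2 ^+ 2 + Q1 ^+ 3 * Q2 + Q2 ^+ 3 / Q1
  - t1 * Q1 * Q2 - t2 * Q2 / Q1 - t3 * Q1 ^+ 2.

Definition H2 (t1 t2 t3 : R) x : R :=
  let Q1 := q1 x in let Q2 := q2 x in let P1 := p1 x in let P2 := p2 x in
  (P2 ^+ 2 / (8 * Q1) + (3 * t2 - 3 * t1 * Q1 ^+ 2 + Q1 ^+ 4 - 3 * Q2 ^+ 2) / (6 * Q1)) ^+ 2
  + t1 * t2 / 2 - P1 ^+ 2 / 4 + 2 * t3 * Q1 * Q2 - 4 / 3 * Q1 ^+ 2 * Q2 ^+ 2.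

Definition Bpoly (t1 t2 : R) x : {poly R} :=
  let Q1 := q1 x in let Q2 := q2 x in let P1 := p1 x in let P2 := p2 x in
  'X ^+ 2 - ((P2 - 2 * Q2) / (2 * Q1)) *: 'X
  + (Q1 ^+ 2 / 6 - t1 / 2 - P1 / (2 * Q1)
     + (P2 ^+ 2 / 4 - Q2 ^+ 2 + t2) / (2 * Q1 ^+ 2))%:P.

End Defs.

(* Main.v *)
Require Import Defs.
From HB Require Import structures.
From mathcomp Require Import all_boot all_order all_algebra.
From mathcomp Require Import all_classical all_reals all_analysis.
From mathcomp Require Import ring lra.
Import Order.TTheory GRing.Theory Num.Theory.
Import numFieldNormedType.Exports.
Local Open Scope ring_scope.
Local Open Scope classical_set_scope.

Set Implicit Arguments. Unset Strict Implicit.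

Definition mk {T : comRingType} n (a : nat -> nat -> T) : 'M[T]_n := \matrix_(i, j) a i j.

Lemma expand0 (T : comRingType) n (a : nat -> nat -> T) :
  \det (mk n.+1 a) =
  \sum_(j < n.+1) a 0 j * ((-1) ^+ j * \det (mk n (fun p q => a (bump 0 p) (bump j q)))).
Proof.
rewrite (expand_det_row _ ord0); apply: eq_bigr => j _.
rewrite mxE /cofactor add0n; congr (_ * (_ * \det _)).
by apply/matrixP => i k; rewrite !mxE.
Qed.

Lemma det1 (T : comRingType) (a : nat -> nat -> T) : \det (mk 1 a) = a 0 0.
Proof. by rewrite det_mx11 mxE. Qed.

Lemma det2 (T : comRingType) (a : nat -> nat -> T) :
  \det (mk 2 a) = a 0 0 * a 1 1 - a 0 1 * a 1 0.
Proof. rewrite expand0 !big_ord_recl big_ord0 !det1 /=. ring. Qed.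

Lemma det3 (T : comRingType) (a : nat -> nat -> T) :
  \det (mk 3 a) =
  a 0 0 * (a 1 1 * a 2 2 - a 1 2 * a 2 1) - a 0 1 * (a 1 0 * a 2 2 - a 1 2 * a 2 0)
  + a 0 2 * (a 1 0 * a 2 1 - a 1 1 * a 2 0).
Proof. rewrite expand0 !big_ord_recl big_ord0 !det2 /=. ring. Qed.

Lemma det4 (T : comRingType) (a : nat -> nat -> T) :
  \det (mk 4 a) =
  a 0 0 * (a 1 1 * (a 2 2 * a 3 3 - a 2 3 * a 3 2) - a 1 2 * (a 2 1 * a 3 3 - a 2 3 * a 3 1)
          + a 1 3 * (a 2 1 * a 3 2 - a 2 2 * a 3 1))
  - a 0 1 * (a 1 0 * (a 2 2 * a 3 3 - a 2 3 * a 3 2) - a 1 2 * (a 2 0 * a 3 3 - a 2 3 * a 3 0)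
          + a 1 3 * (a 2 0 * a 3 2 - a 2 2 * a 3 0))
  + a 0 2 * (a 1 0 * (a 2 1 * a 3 3 - a 2 3 * a 3 1) - a 1 1 * (a 2 0 * a 3 3 - a 2 3 * a 3 0)
          + a 1 3 * (a 2 0 * a 3 1 - a 2 1 * a 3 0))
  - a 0 3 * (a 1 0 * (a 2 1 * a 3 2 - a 2 2 * a 3 1) - a 1 1 * (a 2 0 * a 3 2 - a 2 2 * a 3 0)
          + a 1 2 * (a 2 0 * a 3 1 - a 2 1 * a 3 0)).
Proof. rewrite expand0 !big_ord_recl big_ord0 !det3 /=. ring. Qed.

Definition Mf {T : comRingType} (a b c d : T) (i j : nat) : T :=
  match i, j with
   | 0%N, 0%N => a | 0%N, 1%N => 1
   | 1%N, 0%N => b | 1%N, 1%N => c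
   | 2%N, 1%N => d | 2%N, 2%N => a | 2%N, 3%N => b
   | 3%N, 0%N => - d | 3%N, 2%N => 1 | 3%N, 3%N => c
   | _, _ => 0 end.

Lemma cpmk (T : comRingType) n (m : nat -> nat -> T) :
  char_poly (mk n m) = \det (mk n (fun i j => (if i == j then 'X else 0) - (m i j)%:P)).
Proof.
rewrite /char_poly; congr (\det _); apply/matrixP => i j; rewrite !mxE.
have -> : (i == j) = (nat_of_ord i == nat_of_ord j) by [].
by case: eqP; rewrite ?mulr1n ?mulr0n.
Qed.

Lemma cpMx (T : comRingType) (a b c d : T) :
  char_poly (mk 4 (Mf a b c d)) = ('X^2 - (a + c) *: 'X + (a * c - b)%:P) ^+ 2.
Proof.
rewrite cpmk det4 /=.
rewrite !polyCN !polyC0 !polyC1 -!mul_polyC.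
ring.
Qed.

Section Ords.
Variable R : realType.

Lemma sum4 (F : 'I_4 -> R) : \sum_(l<4) F l = F i0 + F i1 + F i2 + F i3.
Proof.
rewrite !big_ord_recl big_ord0 addr0 !addrA.
by congr (_ + _ + _ + _); congr F; apply: val_inj.
Qed.

Lemma ord4 (i : 'I_4) : i = i0 \/ i = i1 \/ i = i2 \/ i = i3.
Proof.
case: i => [[|[|[|[|n]]]] Hn] //.
- by left; apply: val_inj.
- by right; left; apply: val_inj.
- by right; right; left; apply: val_inj.
- by right; right; right; apply: val_inj.
Qed.

Lemma antisymE (u : nat -> nat -> R) (i j : 'I_4) : antisym u i j = - antisym u j i.
Proof.
rewrite !mxE; case: (ltngtP i j) => _; by rewrite ?opprK ?oppr0.
Qed.
End Ords.

Section Der.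
Variable R : realType.
Implicit Types (x v : 'rV[R]_4) (f g : 'rV[R]_4 -> R).

Lemma dcoord x v (i : 'I_4) :
  is_derive x v (fun y : 'rV[R]_4 => y ord0 i) (v ord0 i).
Proof.
have H : (fun h : R => h^-1 *: (((fun y : 'rV[R]_4 => y ord0 i) \o shift x) (h *: v) - x ord0 i)) @ 0^' --> v ord0 i.
  apply: cvg_near_cst; near=> h.
  rewrite /= !mxE addrK.
  have hn0 : h != 0 by near: h; exact: nbhs_dnbhs_neq.
  by rewrite /GRing.scale /= mulrA mulVf ?mul1r.
split; first by apply/cvg_ex; exists (v ord0 i).
exact: cvg_lim H.
Unshelve. all: by end_near. Qed.

Lemma dcst x v (c : R) : is_derive x v (fun _ => c) 0.
Proof. exact: is_derive_cst. Qed.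

Lemma dadd x v f g df dg : is_derive x v f df -> is_derive x v g dg ->
  is_derive x v (fun y => f y + g y) (df + dg).
Proof. move=> ? ?; exact: is_deriveD. Qed.

Lemma dopp x v f df : is_derive x v f df -> is_derive x v (fun y => - f y) (- df).
Proof. move=> ?; exact: is_deriveN. Qed.

Lemma dmul x v f g df dg : is_derive x v f df -> is_derive x v g dg ->
  is_derive x v (fun y => f y * g y) (f x * dg + g x * df).
Proof. move=> ? ?; exact: is_deriveM. Qed.

Lemma dexp x v f df n : is_derive x v f df ->
  is_derive x v (fun y => f y ^+ n) (n%:R * f x ^+ n.-1 * df).
Proof.
move=> H; have := @is_deriveX _ _ f n x v df H.
rewrite (_ : f ^+ n = fun y => f y ^+ n) //.
by apply/funext => y; rewrite exprfctE.
Qed.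

Lemma dinv x v f df : f x != 0 -> is_derive x v f df ->
  is_derive x v (fun y => (f y)^-1) (- (f x ^+ 2)^-1 * df).
Proof.
move=> fx0 [d1 d2]; split; first exact: derivableV.
by rewrite deriveV // d2.
Qed.

Lemma isd_ext f g x v dg : (forall y, f y = g y) ->
  is_derive x v g dg -> is_derive x v f dg.
Proof. by move=> fg; rewrite (_ : f = g) //; apply/funext. Qed.

Lemma pD l f x df : is_derive x (delta_mx 0 l) f df -> partial l f x = df.
Proof. by move=> [_ H]; rewrite /partial H. Qed.

Lemma dlt (l i : 'I_4) : (delta_mx 0 l : 'rV[R]_4) ord0 i = (l == i)%:R.
Proof. by rewrite mxE [i == l]eq_sym. Qed.

End Der.

Ltac nz := rewrite /= ?(mulf_neq0, expf_neq0, pnatr_eq0, invr_eq0) //.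

Ltac der := lazymatch goal with
 | |- is_true (_ != _) => nz
 | |- is_derive _ _ (fun _ => ?c) _ => apply: dcst
 | |- is_derive _ _ (fun y => q1 y) _ => apply: dcoord
 | |- is_derive _ _ (fun y => q2 y) _ => apply: dcoord
 | |- is_derive _ _ (fun y => p1 y) _ => apply: dcoord
 | |- is_derive _ _ (fun y => p2 y) _ => apply: dcoord
 | |- is_derive _ _ (fun y => @?f y + @?g y) _ => apply: (dadd (f:=f) (g:=g)); der
 | |- is_derive _ _ (fun y => - @?f y) _ => apply: (dopp (f:=f)); der
 | |- is_derive _ _ (fun y => @?f y * @?g y) _ => apply: (dmul (f:=f) (g:=g)); der
 | |- is_derive _ _ (fun y => (@?f y) ^+ ?n) _ => apply: (dexp (f:=f)); der
 | |- is_derive _ _ (fun y => (@?f y)^-1) _ => apply: (dinv (f:=f)); der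
 end.

Section Model.
Variable R : realType.
Variables t1 t2 t3 : R.
Implicit Types (x v : 'rV[R]_4).

Definition dPv x v : 'M[R]_4 :=
  let Q1 := q1 x in let Q2 := q2 x in let P1 := p1 x in let P2 := p2 x in
  let v0 := v ord0 i0 in let v1 := v ord0 i1 in let v2 := v ord0 i2 in let v3 := v ord0 i3 in
  antisym (fun i j => match i, j with
    | 0%N, 2%N => - P2 / (2 * Q1 ^+ 2) * v0 + (2 * Q1)^-1 * v3
    | 1%N, 3%N => Q2 / Q1 ^+ 2 * v0 - Q1^-1 * v1
    | 1%N, 2%N => (- P1 / (2 * Q1 ^+ 2) - Q1 / 3
                           + (P2 ^+ 2 / 4 + Q2 * P2 - Q2 ^+ 2 + t2) / Q1 ^+ 3) * v0
                  - (P2 - 2 * Q2) / (2 * Q1 ^+ 2) * v1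
                  + (2 * Q1)^-1 * v2
                  - (P2 / 2 + Q2) / (2 * Q1 ^+ 2) * v3
    | 2%N, 3%N => (2 * Q1 + 2 * (P2 ^+ 2 / 4 - 3 * Q2 ^+ 2 + t2) / Q1 ^+ 3) * v0
                  + 6 * Q2 / Q1 ^+ 2 * v1
                  - P2 / (2 * Q1 ^+ 2) * v3
    | _, _ => 0 end).

Lemma dpiE x v : q1 x != 0 ->
  forall j k, is_derive x v (fun y => pi' t1 t2 y j k) (dPv x v j k).
Proof.
move=> hx j k.
case: (ord4 j) => [->|[->|[->|->]]]; case: (ord4 k) => [->|[->|[->|->]]];
(eapply isd_ext; [move=> y; rewrite /pi' /antisym !mxE /=; reflexivity | ];
 eapply is_derive_eq; [der | ]; cbv beta; rewrite /dPv /antisym !mxE /=; field; nz).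
Qed.

Lemma pdP x l j k : q1 x != 0 ->
  partial l (fun y => pi' t1 t2 y j k) x = dPv x (delta_mx 0 l) j k.
Proof. by move=> hx; apply: pD; apply: dpiE. Qed.

Lemma pdP2 x l j k : q1 x != 0 ->
  partial l (fun y => (pi_can R + pi' t1 t2 y) j k) x = dPv x (delta_mx 0 l) j k.
Proof.
move=> hx; apply: pD.
eapply isd_ext; first by move=> y; rewrite mxE.
eapply is_derive_eq.
  by apply: dadd; [exact: dcst | exact: (dpiE _ hx)] || (apply: dadd; exact: (dpiE _ hx)).
by rewrite add0r.
Qed.

Definition dH1 x v : R :=
  let Q1 := q1 x in let Q2 := q2 x in let P1 := p1 x in let P2 := p2 x in
  (Q2 * P2 ^+ 2 / (4 * Q1 ^+ 2) + 3 * Q1 ^+ 2 * Q2 - Q2 ^+ 3 / Q1 ^+ 2 - t1 * Q2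
     + t2 * Q2 / Q1 ^+ 2 - 2 * t3 * Q1) * v ord0 i0
  + (- P2 ^+ 2 / (4 * Q1) + Q1 ^+ 3 + 3 * Q2 ^+ 2 / Q1 - t1 * Q1 - t2 / Q1) * v ord0 i1
  + P2 / 2 * v ord0 i2
  + (P1 / 2 - Q2 * P2 / (2 * Q1)) * v ord0 i3.

Definition dH2 x v : R :=
  let Q1 := q1 x in let Q2 := q2 x in let P1 := p1 x in let P2 := p2 x in
  let S := P2 ^+ 2 / (8 * Q1) + (3 * t2 - 3 * t1 * Q1 ^+ 2 + Q1 ^+ 4 - 3 * Q2 ^+ 2) / (6 * Q1) in
  let Sq1 := - P2 ^+ 2 / (8 * Q1 ^+ 2) + (- 6 * t1 * Q1 + 4 * Q1 ^+ 3) / (6 * Q1)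
             - (3 * t2 - 3 * t1 * Q1 ^+ 2 + Q1 ^+ 4 - 3 * Q2 ^+ 2) / (6 * Q1 ^+ 2) in
  (2 * S * Sq1 + 2 * t3 * Q2 - 8 / 3 * Q1 * Q2 ^+ 2) * v ord0 i0
  + (2 * S * (- Q2 / Q1) + 2 * t3 * Q1 - 8 / 3 * Q1 ^+ 2 * Q2) * v ord0 i1
  - P1 / 2 * v ord0 i2
  + 2 * S * P2 / (4 * Q1) * v ord0 i3.

Lemma pH1 x l : q1 x != 0 -> partial l (H1 t1 t2 t3) x = dH1 x (delta_mx 0 l).
Proof.
move=> hx; apply: pD.
eapply isd_ext; [move=> y; rewrite /H1 /=; reflexivity | ].
eapply is_derive_eq; [der | ]; cbv beta; rewrite /dH1 /=; field; nz.
Qed.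

Lemma pH2 x l : q1 x != 0 -> partial l (H2 t1 t2 t3) x = dH2 x (delta_mx 0 l).
Proof.
move=> hx; apply: pD.
eapply isd_ext; [move=> y; rewrite /H2 /=; reflexivity | ].
eapply is_derive_eq; [der | ]; cbv beta; rewrite /dH2 /=; field; nz.
Qed.

End Model.

Section JacRed.
Variable R : realType.
Variables (P : 'I_4 -> 'I_4 -> R) (Dd : 'I_4 -> 'I_4 -> 'I_4 -> R).
Hypothesis HP : forall i j, P i j = - P j i.
Hypothesis HD : forall j k l, Dd j k l = - Dd k j l.

Definition Jac i j k :=
  \sum_(l < 4) (P i l * Dd j k l + P j l * Dd k i l + P k l * Dd i j l).

Lemma Jcyc i j k : Jac i j k = Jac j k i.
Proof. by apply: eq_bigr => l _; ring. Qed.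

Lemma Jswap i j k : Jac i j k = - Jac j i k.
Proof.
rewrite /Jac -sumrN; apply: eq_bigr => l _.
rewrite (HD i k) (HD k j) (HD j i); ring.
Qed.

Lemma Jii i k : Jac i i k = 0.
Proof. have := Jswap i i k; lra. Qed.

Lemma Jred : Jac i0 i1 i2 = 0 -> Jac i0 i1 i3 = 0 -> Jac i0 i2 i3 = 0 -> Jac i1 i2 i3 = 0 ->
  forall i j k, Jac i j k = 0.
Proof.
move=> H1 H2 H3 H4 i j k.
case: (ord4 i) => [->|[->|[->|->]]]; case: (ord4 j) => [->|[->|[->|->]]];
case: (ord4 k) => [->|[->|[->|->]]];
first [ exact: Jii | rewrite Jcyc; exact: Jii | rewrite Jcyc Jcyc; exact: Jii
      | assumption | rewrite Jcyc; assumption | rewrite Jcyc Jcyc; assumption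
      | rewrite Jswap; apply/eqP; rewrite oppr_eq0; apply/eqP;
        first [ assumption | rewrite Jcyc; assumption | rewrite Jcyc Jcyc; assumption ] ].
Qed.
End JacRed.

Lemma cpart (R : realType) (t1 t2 : R) (x : 'rV[R]_4) : q1 x != 0 ->
     char_poly (pi' t1 t2 x *m invmx (pi_can R)) = (Bpoly t1 t2 x) ^+ 2.
Proof.
move=> hx.
have pa i j : pi' t1 t2 x i j = - pi' t1 t2 x j i by rewrite /pi'; exact: antisymE.
have E : pi_can R *m (- pi_can R) = 1%:M.
  apply/matrixP => i j; rewrite !mxE sum4.
  case: (ord4 i) => [->|[->|[->|->]]]; case: (ord4 j) => [->|[->|[->|->]]];
  rewrite /pi_can /antisym !mxE /= ?mulr1n ?mulr0n; ring.
have Ji : invmx (pi_can R) = - pi_can R.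
  have [U _] := mulmx1_unit E.
  by rewrite -[invmx _]mulmx1 -E mulmxA mulVmx // mul1mx.
rewrite Ji.
have Ea : pi' t1 t2 x i0 i2 = p2 x / (2 * q1 x) by rewrite /pi' /antisym mxE.
have Eb : pi' t1 t2 x i1 i2 = p1 x / (2 * q1 x) - q1 x ^+ 2 / 6 + t1 / 2
              - (p2 x ^+ 2 / 4 + q2 x * p2 x - q2 x ^+ 2 + t2) / (2 * q1 x ^+ 2)
  by rewrite /pi' /antisym mxE.
have Ec : pi' t1 t2 x i1 i3 = - (q2 x / q1 x) by rewrite /pi' /antisym mxE.
have E01 : pi' t1 t2 x i0 i1 = 0 by rewrite /pi' /antisym mxE.
have E03 : pi' t1 t2 x i0 i3 = 1 by rewrite /pi' /antisym mxE.
have -> : pi' t1 t2 x *m - pi_can R = mk 4 (Mf (pi' t1 t2 x i0 i2) (pi' t1 t2 x i1 i2)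
                                            (pi' t1 t2 x i1 i3) (pi' t1 t2 x i2 i3)).
  move: (pi' t1 t2 x) pa E01 E03 => P HP E01 E03.
  have P0 i : P i i = 0 by have := HP i i; lra.
  apply/matrixP => i j; rewrite !mxE sum4.
  case: (ord4 i) => [->|[->|[->|->]]]; case: (ord4 j) => [->|[->|[->|->]]];
  rewrite /pi_can /antisym !mxE /= ?(HP i1 i0) ?(HP i2 i0) ?(HP i3 i0) ?(HP i2 i1) ?(HP i3 i1) ?(HP i3 i2) ?P0 ?E01 ?E03;
  ring.
rewrite cpMx Ea Eb Ec /Bpoly /=.
congr (_ ^+ 2); congr (_ - _ *: _ + _%:P); field; rewrite ?mulf_neq0 ?expf_neq0 ?pnatr_eq0 //.
Qed.

Unset Implicit Arguments.

Theorem mainTheorem7 (R : realType) (t1 t2 t3 : R) :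
  let D : set 'rV[R]_4 := fun x => q1 x != 0 in
  is_poisson (pi' t1 t2) D /\
  is_poisson (fun x => pi_can R + pi' t1 t2 x) D /\
  (forall x, D x -> pbracket (pi' t1 t2) (H1 t1 t2 t3) (H2 t1 t2 t3) x = 0) /\
  (forall x, D x ->
     char_poly (pi' t1 t2 x *m invmx (pi_can R)) = (Bpoly t1 t2 x) ^+ 2).
Proof.
move=> D.
have pa x i j : pi' t1 t2 x i j = - pi' t1 t2 x j i by rewrite /pi'; exact: antisymE.
have ca i j : pi_can R i j = - pi_can R j i by rewrite /pi_can; exact: antisymE.
have pa2 x i j : (pi_can R + pi' t1 t2 x) i j = - (pi_can R + pi' t1 t2 x) j i.
  have E a b : (pi_can R + pi' t1 t2 x) a b = pi_can R a b + pi' t1 t2 x a b by rewrite mxE.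
  by rewrite !E (pa x i j) (ca i j) opprD.
split.
  move=> x Dx; have hx : q1 x != 0 := Dx; split; first exact: pa.
  move=> i j k.
  have HD : forall j k l, partial l (fun y => pi' t1 t2 y j k) x
                        = - partial l (fun y => pi' t1 t2 y k j) x.
    by move=> j' k' l; rewrite !pdP // /dPv; exact: antisymE.
  change (Jac (pi' t1 t2 x) (fun j k l => partial l (fun y => pi' t1 t2 y j k) x) i j k = 0).
  move: i j k; apply: (Jred (P:=pi' t1 t2 x) HD);
  rewrite /Jac sum4 !pdP // /pi' /dPv /antisym !mxE /= ?mulr1n ?mulr0n; field; nz.
split.
  move=> x Dx; have hx : q1 x != 0 := Dx; split; first exact: pa2.
  move=> i j k.
  have HD : forall j k l, partial l (fun y => (pi_can R + pi' t1 t2 y) j k) x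
                        = - partial l (fun y => (pi_can R + pi' t1 t2 y) k j) x.
    by move=> j' k' l; rewrite !pdP2 // /dPv; exact: antisymE.
  change (Jac (pi_can R + pi' t1 t2 x)
            (fun j k l => partial l (fun y => (pi_can R + pi' t1 t2 y) j k) x) i j k = 0).
  move: i j k; apply: (Jred (P:=pi_can R + pi' t1 t2 x) HD);
  rewrite /Jac sum4 !pdP2 // /pi_can /pi' /dPv /antisym !mxE /= ?mulr1n ?mulr0n; field; nz.
split.
  move=> x Dx; have hx : q1 x != 0 := Dx.
  rewrite /pbracket !sum4 !pH1 // !pH2 // /pi' /dH1 /dH2 /antisym !mxE /= ?mulr1n ?mulr0n.
  field; nz.
move=> x Dx; exact: (cpart t1 t2 Dx).
Qed.
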